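(* Let $u$ be a symmetric solution of $i u_t + u_{xx} + |u|^4u=0$ with $\|u_0\|_{L^2}=\|Q\|_{L^2}$, on its maximal interval of existence $I$. Then the function $$d(t) = \inf_{\lambda>0,\gamma\in\mathbb{R}} \|e^{i\gamma}\lambda^{1/2}u(t,\lambda x) - Q(x)\|_{L^2(\mathbb{R})}$$ is upper semicontinuous on $I$. Moreover, there exists $\delta>0$ such that $d$ is continuous at every $t\in I$ with $d(t)<\delta$.
   Context: $Q(x) = (3/\cosh^2(2x))^{1/4}$. Solutions are strong $L^2$ solutions (in $C_tL^2_x\cap L^4_{t,loc}L^\infty_x$). *)

(* Defs.v *)
From HB Require Import structures.
From mathcomp Require Import all_boot all_order all_algebra.
From mathcomp Require Import all_classical all_reals all_analysis.
From mathcomp Require Import ess_sup_inf.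
Set Implicit Arguments. Unset Strict Implicit. Unset Printing Implicit Defensive.
Import Order.TTheory GRing.Theory Num.Def Num.Theory.
Import numFieldNormedType.Exports.
Local Open Scope classical_set_scope.
Local Open Scope ring_scope.

(* Complex numbers are encoded as pairs (real part, imaginary part) of reals.
   A space-time function u(t,x) is  u : R -> R -> R * R. *)

Section NLS.
Variable R : realType.
Notation mu := (@lebesgue_measure R).

Definition cabs2 (z : R * R) : R := z.1 ^+ 2 + z.2 ^+ 2.

Definition L2sq (f : R -> R * R) : \bar R :=
  (\int[mu]_x (cabs2 (f x))%:E)%E.

(* ||f||_{L^2} (meaningful when f is in L^2) *)
Definition L2norm (f : R -> R * R) : R := Num.sqrt (fine (L2sq f)).

Definition in_L2 (f : R -> R * R) : Prop :=
  measurable_fun setT (fun x => (f x).1) /\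
  measurable_fun setT (fun x => (f x).2) /\ (L2sq f < +oo)%E.

Definition Linf (f : R -> R * R) : \bar R :=
  ess_sup mu (fun x => (Num.sqrt (cabs2 (f x)))%:E).

Definition cosh (y : R) : R := (expR y + expR (- y)) / 2.

Definition Q (x : R) : R * R := (powR (3 / (cosh (2 * x)) ^+ 2) (4^-1), 0).

Definition dt (f : R -> R -> R) : R -> R -> R :=
  fun t x => derive1 (fun s => f s x) t.
Definition dx (f : R -> R -> R) : R -> R -> R :=
  fun t x => derive1 (fun y => f t y) x.

Fixpoint pder (w : seq bool) (f : R -> R -> R) : R -> R -> R :=
  match w with
  | [::] => f
  | b :: w' => if b then dt (pder w' f) else dx (pder w' f)
  end.

Definition smooth2 (f : R -> R -> R) : Prop :=
  forall (w : seq bool) (t x : R),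
    derivable (fun s => pder w f s x) t 1 /\
    derivable (fun y => pder w f t y) x 1 /\
    {for (t, x), continuous (fun z : R * R => pder w f z.1 z.2)}.

Definition test_fun (a b : \bar R) (phi : R -> R -> R) : Prop :=
  smooth2 phi /\
  exists c d M : R, [/\ (a < c%:E)%E, (d%:E < b)%E &
    forall t x, (t < c \/ d < t \/ M < `|x|) -> phi t x = 0].

Definition in_I (a b : \bar R) (t : R) : Prop := (a < t%:E)%E /\ (t%:E < b)%E.

(* Strong L^2 solution of  i u_t + u_xx + |u|^4 u = 0  on the open
   interval (a,b), in the class C_t L^2_x cap L^4_{t,loc} L^infty_x,
   with the equation holding in the sense of distributions on (a,b) x R.
   Writing u = v + i w, the equation splits into
     -w_t + v_xx + |u|^4 v = 0   and   v_t + w_xx + |u|^4 w = 0. *)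
Definition nls_solution (u : R -> R -> R * R) (a b : \bar R) : Prop :=
  (a < b)%E /\ [/\
      measurable_fun setT (fun z : R * R => (u z.1 z.2).1) /\
      measurable_fun setT (fun z : R * R => (u z.1 z.2).2),
      (forall t, in_I a b t -> in_L2 (u t)),
      (forall t, in_I a b t -> forall eps : R, 0 < eps ->
         exists eta : R, 0 < eta /\ forall s, in_I a b s -> `|s - t| < eta ->
           L2norm (fun x => ((u s x).1 - (u t x).1, (u s x).2 - (u t x).2)) < eps),
      (forall c d : R, (a < c%:E)%E -> (d%:E < b)%E ->
         (\int[mu]_(t in `[c, d]) ((Linf (u t)) ^+ 4) < +oo)%E) &
      (forall phi, test_fun a b phi ->
         (\int[mu]_t \int[mu]_x
            ((u t x).2 * dt phi t x + (u t x).1 * dx (dx phi) t x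
             + (cabs2 (u t x)) ^+ 2 * (u t x).1 * phi t x)%:E = 0)%E /\
         (\int[mu]_t \int[mu]_x
            (- (u t x).1 * dt phi t x + (u t x).2 * dx (dx phi) t x
             + (cabs2 (u t x)) ^+ 2 * (u t x).2 * phi t x)%:E = 0)%E)].

Definition maximal_solution (u : R -> R -> R * R) (a b : \bar R) : Prop :=
  [/\ in_I a b 0, nls_solution u a b &
      forall (a' b' : \bar R) (v : R -> R -> R * R),
        (a' <= a)%E -> (b <= b')%E -> nls_solution v a' b' ->
        (forall t x, in_I a b t -> v t x = u t x) -> a' = a /\ b' = b].

Definition symmetric_sol (u : R -> R -> R * R) (a b : \bar R) : Prop :=
  forall t x, in_I a b t -> u t (- x) = u t x.

Definition modulated (u : R -> R -> R * R) (t lam gam : R) : R -> R * R :=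
  fun x =>
    let z := u t (lam * x) in
    (Num.sqrt lam * (cos gam * z.1 - sin gam * z.2) - (Q x).1,
     Num.sqrt lam * (sin gam * z.1 + cos gam * z.2) - (Q x).2).

Definition dist_Q (u : R -> R -> R * R) (t : R) : R :=
  inf [set L2norm (modulated u t p.1 p.2) | p in [set p : R * R | 0 < p.1]].
End NLS.

(* Main.v *)
Require Import Defs.
From HB Require Import structures.
From mathcomp Require Import all_boot all_order all_algebra.
From mathcomp Require Import all_classical all_reals all_analysis.
From mathcomp Require Import ess_sup_inf.
From mathcomp Require Import measurable_realfun ring lra.
Import Order.TTheory GRing.Theory Num.Def Num.Theory.
Import numFieldNormedType.Exports.
Local Open Scope classical_set_scope.
Local Open Scope ring_scope.
Set Implicit Arguments. Unset Strict Implicit. Unset Printing Implicit Defensive.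

Section Scal.
Variable R : realType.
Notation mu := (@lebesgue_measure R).
Variable lam : R.
Lemma mphi : measurable_fun (setT : set (measurableTypeR R))
  (fun x : measurableTypeR R => (lam * x : measurableTypeR R)).
Proof. exact: measurable_funM. Qed.
Definition pf (A : set (measurableTypeR R)) : \bar R :=
  mu ((fun x : measurableTypeR R => (lam * x : measurableTypeR R)) @^-1` A).
Local Open Scope ereal_scope.
Let pf0 : pf set0 = 0.
Proof. by rewrite /pf preimage_set0 measure0. Qed.
Let pf_ge0 A : 0 <= pf A.
Proof. by apply: measure_ge0. Qed.
Let pf_sa : semi_sigma_additive pf.
Proof.
move=> F mF tF mUF; rewrite /pf preimage_bigcup.
apply: measure_semi_sigma_additive.
- by move=> n; rewrite -[X in measurable X]setTI; exact: mphi.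
- apply/trivIsetP => /= i j _ _ ij; rewrite -preimage_setI.
  by move/trivIsetP : tF => /(_ _ _ _ _ ij) ->//; rewrite preimage_set0.
- by rewrite -preimage_bigcup -[X in measurable X]setTI; exact: mphi.
Qed.
HB.instance Definition _ := isMeasure.Build _ _ _ pf pf0 pf_ge0 pf_sa.
End Scal.
Section S2.
Variable R : realType.
Notation mu := (@lebesgue_measure R).

Local Open Scope ereal_scope.
Lemma pfE (lam : R) (hl : (0 < lam)%R) A : measurable A ->
  mu A = mscale (NngNum (ltW hl)) (pf lam) A.
Proof.
move=> mA; apply: (@lebesgue_measure_unique R (mscale (NngNum (ltW hl)) (pf lam))) => // X [[a b] _ <-] /=.
rewrite /mscale /pf /=.
have -> : pf lam `]a, b]%classic = mu `](a / lam)%R, (b / lam)%R]%classic.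
  rewrite /pf; congr (mu _).
  apply/seteqP; split => x /=; rewrite !in_itv /= => /andP[h1 h2]; apply/andP; split.
  - by rewrite ltr_pdivrMr // mulrC.
  - by rewrite ler_pdivlMr // mulrC.
  - by rewrite -ltr_pdivrMl // mulrC.
  - by rewrite -ler_pdivlMl // mulrC.
rewrite !lebesgue_measure_itv /= !lte_fin ltr_pM2r ?invr_gt0 //.
case: ifPn => _; last by rewrite mule0.
by rewrite -EFinD -EFinM; congr (_%:E); rewrite -mulrBl mulrCA divff ?mulr1 // gt_eqF.
Qed.

Lemma scale_integral (lam : R) (g : R -> R) : (0 < lam)%R ->
  measurable_fun setT g -> (forall x, (0 <= g x)%R) ->
  \int[mu]_x (lam * g (lam * x))%:E = \int[mu]_x (g x)%:E.
Proof.
move=> hl mg g0.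
rewrite [RHS](eq_measure_integral (mscale (NngNum (ltW hl)) (pf lam))); last first.
  by move=> A mA _; exact: pfE.
rewrite [RHS]ge0_integral_mscale //=; last 2 first.
  - exact/measurable_EFinP.
  - by move=> x _; rewrite lee_fin.
rewrite /pf.
rewrite (ge0_integral_pushforward (mphi lam)) //=; last 2 first.
  - exact/measurable_EFinP.
  - by move=> y _; rewrite lee_fin.
rewrite preimage_setT.
under eq_integral do rewrite EFinM.
rewrite ge0_integralZl //.
- apply/measurable_EFinP; apply: measurableT_comp => //; exact: (mphi lam).
- by move=> x _; rewrite lee_fin.
- by rewrite ltW.
Qed.
End S2.

Section Aux.
Variable R : realType.
Notation mu := (@lebesgue_measure R).
Implicit Types f g : R -> R * R.

Definition pm f := measurable_fun setT (fun x => (f x).1) /\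
  measurable_fun setT (fun x => (f x).2).
Definition padd f g : R -> R * R := fun x => ((f x).1 + (g x).1, (f x).2 + (g x).2).
Definition pneg f : R -> R * R := fun x => (- (f x).1, - (f x).2).
Definition rs (lam gam : R) f : R -> R * R := fun x =>
  (Num.sqrt lam * (cos gam * (f (lam * x)).1 - sin gam * (f (lam * x)).2),
   Num.sqrt lam * (sin gam * (f (lam * x)).1 + cos gam * (f (lam * x)).2)).

Lemma cabs2_ge0 (z : R * R) : 0 <= cabs2 z.
Proof. by rewrite /cabs2 addr_ge0 // sqr_ge0. Qed.

Lemma pm_cabs2 f : pm f -> measurable_fun setT (fun x => cabs2 (f x)).
Proof. by case=> m1 m2; rewrite /cabs2; apply: measurable_funD; exact: measurable_funX. Qed.

Lemma L2sq_ge0 f : (0 <= L2sq f)%E.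
Proof. by apply: integral_ge0 => x _; rewrite lee_fin cabs2_ge0. Qed.

Lemma pm_padd f g : pm f -> pm g -> pm (padd f g).
Proof. by case=> ? ? [? ?]; split; apply: measurable_funD. Qed.

Lemma pm_pneg f : pm f -> pm (pneg f).
Proof. by case=> m1 m2; split; [exact: (measurable_funN m1)|exact: (measurable_funN m2)]. Qed.

Lemma pm_rs lam gam f : pm f -> pm (rs lam gam f).
Proof.
case=> m1 m2.
have m1' : measurable_fun setT (fun x => (f (lam * x)).1).
  exact: (measurableT_comp m1 (mphi lam)).
have m2' : measurable_fun setT (fun x => (f (lam * x)).2).
  exact: (measurableT_comp m2 (mphi lam)).
by split; apply: measurable_funM => //; [apply: measurable_funB|apply: measurable_funD];
  apply: measurable_funM.
Qed.

Lemma L2sq_pneg f : L2sq (pneg f) = L2sq f.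
Proof. by rewrite /L2sq; apply: eq_integral => x _; rewrite /cabs2 /= !sqrrN. Qed.

Lemma L2sq_rs lam gam f : 0 < lam -> pm f -> L2sq (rs lam gam f) = L2sq f.
Proof.
move=> l0 mf; rewrite /L2sq -(@scale_integral R lam (fun x => cabs2 (f x))) //; last first.
- by move=> x; exact: cabs2_ge0.
- exact: pm_cabs2.
apply: eq_integral => x _; congr EFin; rewrite /cabs2 /= !exprMn sqr_sqrtr ?ltW //.
rewrite -mulrDr; congr (_ * _).
transitivity ((cos gam ^+ 2 + sin gam ^+ 2) * ((f (lam * x)).1 ^+ 2 + (f (lam * x)).2 ^+ 2)).
  by ring.
by rewrite cos2Dsin2 mul1r.
Qed.

Lemma pw_bound (c : R) (z w : R * R) : 0 < c ->
  cabs2 (z.1 + w.1, z.2 + w.2) <= (1 + c) * cabs2 z + (1 + c^-1) * cabs2 w.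
Proof.
move=> c0; rewrite -subr_ge0.
have -> : (1 + c) * cabs2 z + (1 + c^-1) * cabs2 w - cabs2 (z.1 + w.1, z.2 + w.2) =
  c^-1 * ((c * z.1 - w.1) ^+ 2 + (c * z.2 - w.2) ^+ 2).
  by rewrite /cabs2 /=; field; rewrite gt_eqF.
by apply: mulr_ge0; [rewrite invr_ge0 ltW | rewrite addr_ge0 // sqr_ge0].
Qed.

Lemma sqrt_tri (A B X : R) : 0 <= A -> 0 <= B -> 0 <= X ->
  (forall c, 0 < c -> X <= (1 + c) * A + (1 + c^-1) * B) ->
  Num.sqrt X <= Num.sqrt A + Num.sqrt B.
Proof.
move=> A0 B0 X0 H; apply/ler_addgt0Pr => e e0.
set a := Num.sqrt A; set b := Num.sqrt B.
have a0 : 0 <= a by exact: sqrtr_ge0.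
have b0 : 0 <= b by exact: sqrtr_ge0.
set a' := a + e / 2; set b' := b + e / 2.
have a'0 : 0 < a' by rewrite /a' ltr_wpDl // divr_gt0.
have b'0 : 0 < b' by rewrite /b' ltr_wpDl // divr_gt0.
have HX := H (b' / a') (divr_gt0 b'0 a'0).
have hA : A <= a' ^+ 2.
  rewrite -(sqr_sqrtr A0) -/a /a'; have : 0 <= e / 2 by rewrite divr_ge0 // ltW.
  move: a0; set y := e / 2; nra.
have hB : B <= b' ^+ 2.
  rewrite -(sqr_sqrtr B0) -/b /b'; have : 0 <= e / 2 by rewrite divr_ge0 // ltW.
  move: b0; set y := e / 2; nra.
have HX2 : X <= (a' + b') ^+ 2.
  apply: (le_trans HX).
  have -> : (a' + b') ^+ 2 = (1 + b' / a') * a' ^+ 2 + (1 + (b' / a')^-1) * b' ^+ 2.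
    by field; rewrite !gt_eqF.
  apply: lerD; apply: ler_wpM2l => //; rewrite ?addr_ge0 // ?invr_ge0 ?divr_ge0 // ltW //.
have -> : a + b + e = a' + b' by rewrite /a' /b'; field.
rewrite -(@ger0_norm _ (a' + b')); last by rewrite addr_ge0 // ltW.
by rewrite -sqrtr_sqr ler_sqrt // sqr_ge0.
Qed.
End Aux.

Section Aux2.
Variable R : realType.
Notation mu := (@lebesgue_measure R).
Implicit Types f g : R -> R * R.

Lemma L2sq_fine f : (L2sq f < +oo)%E -> L2sq f = (fine (L2sq f))%:E.
Proof. by move=> h; rewrite fineK // ge0_fin_numE // L2sq_ge0. Qed.

Lemma L2_key f g (c : R) : pm f -> pm g -> (L2sq f < +oo)%E -> (L2sq g < +oo)%E -> 0 < c ->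
  (L2sq (padd f g) <= ((1 + c) * fine (L2sq f) + (1 + c^-1) * fine (L2sq g))%:E)%E.
Proof.
move=> mf mg ff fg c0.
have c1 : 0 <= 1 + c by rewrite addr_ge0 // ltW.
have c2 : 0 <= 1 + c^-1 by rewrite addr_ge0 // invr_ge0 ltW.
rewrite EFinD !EFinM -L2sq_fine // -L2sq_fine // /L2sq.
have -> : ((1 + c)%:E * \int[mu]_x (cabs2 (f x))%:E +
   (1 + c^-1)%:E * \int[mu]_x (cabs2 (g x))%:E)%E =
   (\int[mu]_x (((1 + c) * cabs2 (f x)) + ((1 + c^-1) * cabs2 (g x)))%:E)%E.
  under [RHS]eq_integral do rewrite EFinD.
  rewrite ge0_integralD //; last 4 first.
  - by move=> x _; rewrite lee_fin mulr_ge0 // cabs2_ge0.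
  - by apply/measurable_EFinP; apply: measurable_funM => //; exact: pm_cabs2.
  - by move=> x _; rewrite lee_fin mulr_ge0 // cabs2_ge0.
  - by apply/measurable_EFinP; apply: measurable_funM => //; exact: pm_cabs2.
  congr (_ + _)%E; under [RHS]eq_integral do rewrite EFinM;
    rewrite ge0_integralZl_EFin //.
  - by move=> x _; rewrite lee_fin cabs2_ge0.
  - by apply/measurable_EFinP; exact: pm_cabs2.
  - by move=> x _; rewrite lee_fin cabs2_ge0.
  - by apply/measurable_EFinP; exact: pm_cabs2.
apply: ge0_le_integral => //.
- by move=> x _; rewrite lee_fin cabs2_ge0.
- by apply/measurable_EFinP; apply: pm_cabs2; exact: pm_padd.
- apply/measurable_EFinP; apply: measurable_funD; apply: measurable_funM => //; exact: pm_cabs2.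
- by move=> x _; rewrite lee_fin; exact: pw_bound.
Qed.

Lemma L2_tri f g : pm f -> pm g -> (L2sq f < +oo)%E -> (L2sq g < +oo)%E ->
  (L2sq (padd f g) < +oo)%E /\ L2norm (padd f g) <= L2norm f + L2norm g.
Proof.
move=> mf mg ff fg.
have fin : (L2sq (padd f g) < +oo)%E.
  by apply: (le_lt_trans (L2_key mf mg ff fg ltr01)); exact: ltry.
split => //; rewrite /L2norm; apply: sqrt_tri.
- exact: fine_ge0 (L2sq_ge0 f).
- exact: fine_ge0 (L2sq_ge0 g).
- exact: fine_ge0 (L2sq_ge0 _).
move=> c c0; rewrite -lee_fin -L2sq_fine //; exact: L2_key.
Qed.
End Aux2.
Section QM.
Variable R : realType.
Lemma cosh_gt0 (y : R) : 0 < cosh y.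
Proof. by rewrite /cosh divr_gt0 // addr_gt0 // expR_gt0. Qed.

Lemma cont_h : continuous (fun x : R => 3 / (cosh (2 * x)) ^+ 2).
Proof.
move=> x.
have c1 : {for x, continuous (fun x : R => 2 * x)}.
  by apply: continuousM; [exact: cst_continuous | exact: (fun z => @cvg_id _ _)].
have c2 : {for x, continuous (fun x : R => cosh (2 * x))}.
  rewrite /cosh; apply: (continuousM (s := fun z : R => expR (2*z) + expR (-(2*z))) (t := fun=> 2^-1)); last exact: cst_continuous.
  apply: (continuousD (V := R^o) (f := fun z : R => expR (2*z)) (g := fun z => expR (-(2*z)))).
    exact: (continuous_comp c1 (@continuous_expR R _)).
  apply: (continuous_comp (continuousN c1)); exact: continuous_expR.
apply: (continuousM (s := fun=> 3) (t := fun z : R => (cosh (2 * z) ^+ 2)^-1)); first exact: cst_continuous.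
apply: (continuousV (s := fun z : R => cosh (2 * z) ^+ 2)); first by rewrite expf_neq0 // gt_eqF // cosh_gt0.
exact: (continuousM (s := fun z : R => cosh (2 * z)) (t := fun z : R => cosh (2 * z))).
Qed.

Lemma measQ1 : measurable_fun setT (fun x : R => (Q x).1).
Proof.
rewrite /Q /=.
apply: (measurableT_comp (measurable_powR _)).
exact: continuous_measurable_fun cont_h.
Qed.
End QM.

Section Main.
Variable R : realType.
Notation mu := (@lebesgue_measure R).
Variable u : R -> R -> R * R.

Definition nQ : R -> R * R := pneg (@Q R).
Definition Dst (s t : R) : R -> R * R :=
  fun x => ((u s x).1 - (u t x).1, (u s x).2 - (u t x).2).

Lemma pmQ : pm (@Q R).
Proof. split; first exact: measQ1. by rewrite /Q /=; exact: measurable_cst. Qed.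

Lemma pm_nQ : pm nQ.
Proof. exact/pm_pneg/pmQ. Qed.

Lemma modE t lam gam : modulated u t lam gam = padd (rs lam gam (u t)) nQ.
Proof. by []. Qed.

Lemma DstE s t : Dst s t = padd (u s) (pneg (u t)).
Proof. by []. Qed.

Lemma mod_shift s t lam gam :
  modulated u s lam gam = padd (rs lam gam (Dst s t)) (modulated u t lam gam).
Proof.
apply/funext => x; rewrite /padd /rs /modulated /Dst /=.
by congr pair; ring.
Qed.

Lemma nQ_shift t lam gam :
  nQ = padd (pneg (rs lam gam (u t))) (modulated u t lam gam).
Proof.
apply/funext => x; rewrite /padd /rs /modulated /nQ /pneg /=.
by congr pair; ring.
Qed.

Lemma L2norm_ge0 (f : R -> R * R) : 0 <= L2norm f.
Proof. exact: sqrtr_ge0. Qed.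

Let S t := [set L2norm (modulated u t p.1 p.2) | p in [set p : R * R | 0 < p.1]].

Lemma S_lb t : has_lbound (S t).
Proof. by exists 0 => _ [p _ <-]; exact: L2norm_ge0. Qed.

Lemma S_ne t : nonempty (S t).
Proof. by exists (L2norm (modulated u t 1 0)); exists (1, 0) => //=; exact: ltr01. Qed.

Lemma dist_ge0 t : 0 <= dist_Q u t.
Proof. apply: lb_le_inf; first exact: S_ne. by move=> _ [p _ <-]; exact: L2norm_ge0. Qed.

Lemma dist_le t lam gam : 0 < lam -> dist_Q u t <= L2norm (modulated u t lam gam).
Proof. move=> l0; apply: (ge_inf (S_lb t)). by exists (lam, gam). Qed.

Lemma key (s t : R) : pm (u s) -> pm (u t) -> (L2sq (u s) < +oo)%E -> (L2sq (u t) < +oo)%E ->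
  dist_Q u s <= L2norm (Dst s t) + dist_Q u t.
Proof.
move=> ms mt fs ft.
have mD : pm (Dst s t) by rewrite DstE; apply: pm_padd => //; exact: pm_pneg.
have fD : (L2sq (Dst s t) < +oo)%E.
  by rewrite DstE; apply: (L2_tri ms (pm_pneg mt) fs _).1; rewrite L2sq_pneg.
have [fQ|nfQ] := boolP (L2sq nQ < +oo)%E.
  rewrite addrC -lerBlDr; apply: lb_le_inf; first exact: S_ne.
  move=> _ [[lam gam] /= l0 <-]; rewrite lerBlDr.
  apply: (le_trans (dist_le s gam l0)).
  have mrt : pm (rs lam gam (u t)) by exact: pm_rs.
  have frt : (L2sq (rs lam gam (u t)) < +oo)%E by rewrite L2sq_rs.
  have mmt : pm (modulated u t lam gam) by rewrite modE; apply: pm_padd => //; exact: pm_nQ.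
  have fmt : (L2sq (modulated u t lam gam) < +oo)%E by rewrite modE; exact: (L2_tri mrt pm_nQ frt fQ).1.
  have mrD : pm (rs lam gam (Dst s t)) by exact: pm_rs.
  have frD : (L2sq (rs lam gam (Dst s t)) < +oo)%E by rewrite L2sq_rs.
  rewrite (mod_shift s t); apply: (le_trans (L2_tri mrD mmt frD fmt).2).
  by rewrite /L2norm L2sq_rs // addrC.
have z t' : pm (u t') -> (L2sq (u t') < +oo)%E -> dist_Q u t' = 0.
  move=> mt' ft'; apply/eqP; rewrite eq_le dist_ge0 andbT.
  apply: (le_trans (dist_le t' 0 ltr01)).
  have mrt : pm (rs 1 0 (u t')) by exact: pm_rs.
  have frt : (L2sq (rs 1 0 (u t')) < +oo)%E by rewrite L2sq_rs.
  have mmt : pm (modulated u t' 1 0) by rewrite modE; apply: pm_padd => //; exact: pm_nQ.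
  have [fmt|nfmt] := boolP (L2sq (modulated u t' 1 0) < +oo)%E.
    exfalso; move: nfQ; rewrite (nQ_shift t' 1 0).
    rewrite (L2_tri (pm_pneg mrt) mmt _ fmt).1 //.
    by rewrite L2sq_pneg.
  move: nfmt; rewrite /L2norm ltey negbK => /eqP ->.
  by rewrite /= sqrtr0.
rewrite (z s) // (z t) // addr0; exact: L2norm_ge0.
Qed.
End Main.

Unset Implicit Arguments.
Theorem theorem2p4 (R : realType) (u : R -> R -> R * R) (a b : \bar R) :
  maximal_solution u a b ->
  symmetric_sol u a b ->
  L2norm (u 0) = L2norm (@Q R) ->
  (* d is upper semicontinuous on I = (a,b) *)
  (forall t, in_I a b t -> forall eps : R, 0 < eps ->
     exists eta : R, 0 < eta /\
       forall s, in_I a b s -> `|s - t| < eta -> dist_Q u s < dist_Q u t + eps) /\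
  (* d is continuous at every t in I with d(t) < delta *)
  (exists delta : R, 0 < delta /\
     forall t, in_I a b t -> dist_Q u t < delta ->
       forall eps : R, 0 < eps ->
         exists eta : R, 0 < eta /\
           forall s, in_I a b s -> `|s - t| < eta ->
             `|dist_Q u s - dist_Q u t| < eps).
Proof.
move=> [_ [_ [_ hL2 hcont _ _]] _] _ _.
have K s t : in_I a b s -> in_I a b t ->
    dist_Q u s <= L2norm (Dst u s t) + dist_Q u t.
  move=> Is It; have [m1s [m2s fs]] := hL2 s Is; have [m1t [m2t ft]] := hL2 t It.
  by apply: key.
have Dsym s t : L2norm (Dst u s t) = L2norm (Dst u t s).
  rewrite /L2norm /L2sq; congr (Num.sqrt (fine _)); apply: eq_integral => x _.
  by congr EFin; rewrite /cabs2 /Dst /=; ring.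
split.
  move=> t It e e0; have [eta [eta0 H]] := hcont t It e e0.
  exists eta; split => // s Is hst.
  have := H s Is hst; have := K s t Is It; rewrite /Dst; lra.
exists 1; split => // t It _ e e0; have [eta [eta0 H]] := hcont t It e e0.
exists eta; split => // s Is hst.
have := H s Is hst; have := K s t Is It; have := K t s It Is.
rewrite -Dsym /Dst => h1 h2 h3.
rewrite ltr_norml; apply/andP; split; lra.
Qed.
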